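(* Fix a number $x$ (real or complex). For a real parameter $\alpha$, say a sequence $(u_n)_{n\ge0}$ satisfies (RE($\alpha$)) if $(n+\alpha)u_{n+1}=2xn\,u_n-(n-\alpha)u_{n-1}$ for all $n\ge1$ (and a sequence $(w_n)_{n\ge1}$ satisfies it for $n\ge2$ if the same identity holds for all $n\ge2$). If $(u_n)_{n\ge0}$ satisfies $(n+\tfrac12)u_{n+1}=2xn\,u_n-(n-\tfrac12)u_{n-1}$ for all $n\ge1$, and $\hat u_n=\frac1n\,(u_{n+1}-u_{n-1})$ for $n\ge1$, then $(n+\tfrac32)\hat u_{n+1}=2xn\,\hat u_n-(n-\tfrac32)\hat u_{n-1}$ for all $n\ge2$. *)

(* Defs.v *)
From mathcomp Require Import all_boot all_order all_algebra.
Set Implicit Arguments. Unset Strict Implicit. Unset Printing Implicit Defensive.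
Import Order.TTheory GRing.Theory Num.Theory.
Local Open Scope ring_scope.

Definition RE (R : numFieldType) (x alpha : R) (u : nat -> R) (n0 : nat) : Prop :=
  forall n : nat, (n0 <= n)%N ->
    (n%:R + alpha) * u n.+1 = 2 * x * n%:R * u n - (n%:R - alpha) * u n.-1.

Definition uhat (R : numFieldType) (u : nat -> R) (n : nat) : R :=
  (u n.+1 - u n.-1) / n%:R.

(* Main.v *)
Require Import Defs.
From mathcomp Require Import all_boot all_order all_algebra.
From mathcomp Require Import ring lra.
Import Order.TTheory GRing.Theory Num.Theory.
Local Open Scope ring_scope.

Theorem theorem1 (R : numFieldType) (x : R) (u : nat -> R) :
  RE x (1 / 2) u 1 -> RE x (3 / 2) (uhat u) 2.
Proof.
move=> H n; case: n => [|[|m]] // _.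
have H1 := H m.+3 isT. have H2 := H m.+1 isT.
rewrite /uhat /=.
rewrite /= in H1 H2.
set t : R := m%:R in H1 H2 *.
have e1 : (m.+1)%:R = t + 1 :> R by rewrite -addn1 natrD.
have e2 : (m.+2)%:R = t + 2 :> R by rewrite -addn2 natrD.
have e3 : (m.+3)%:R = t + 3 :> R by rewrite -addn3 natrD.
rewrite e1 e2 e3 in H1 H2 *.
have t0 : 0 <= t by rewrite /t ler0n.
have pos : forall c : R, 0 < c -> t + c != 0.
  by move=> c hc; rewrite gt_eqF // (ltr_wpDl t0 hc).
have h2 : 0 < 1/2 :> R by rewrite divr_gt0 ?ltr01 ?ltr0n.
have n1 : t + 1 != 0 by apply: pos; rewrite ltr01.
have n2 : t + 2 != 0 by apply: pos; rewrite ltr0n.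
have n3 : t + 3 != 0 by apply: pos; rewrite ltr0n.
have n4 : t + 3 + 1/2 != 0 by rewrite -addrA; apply: pos; rewrite addr_gt0 ?ltr0n.
have n5 : t + 1 - 1/2 != 0.
  have -> : t + 1 - 1/2 = t + 1/2 by field.
  exact: pos.
have ha : u m.+4 = (2 * x * (t + 3) * u m.+3 - (t + 3 - 1/2) * u m.+2) / (t + 3 + 1/2).
  by rewrite -H1 mulrC mulKf.
have hb : u m = (2 * x * (t + 1) * u m.+1 - (t + 1 + 1/2) * u m.+2) / (t + 1 - 1/2).
  apply: (mulfI n5); rewrite [RHS]mulrC divfK //.
  by apply/eqP; rewrite -subr_eq0 H2; apply/eqP; ring.
rewrite ha hb.
field.
rewrite -/t n1 n2 n3 /=.
have -> : (t + 1) * 2 - 1 = (t + 1 - 1/2) * 2 by field.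
have -> : (t + 3) * 2 + 1 = (t + 3 + 1/2) * 2 by field.
by rewrite !mulf_neq0 ?pnatr_eq0.
Qed.
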